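(* Let ${\mathcal R}$ be a similarity relation, $\mu$ a cut value, and $t,s$ higher-order patterns. If $\mathsf{HOPSU}$, started on $\{t\simeq^?_{{\mathcal R},\mu}s\};\varepsilon;1$, stops with a configuration $\emptyset;\sigma;\mathfrak{d}$, then $\mathfrak{d}\ge\mu$ and ${\mathcal R}(t\sigma,s\sigma)=\mathfrak{d}$, i.e. $\sigma$ is an $({\mathcal R},\mu)$-unifier of $t$ and $s$ with degree $\mathfrak{d}$.
   Context: Terms: simply typed $\lambda$-terms over disjoint countably infinite sets $\mathcal{V}$ (typed variables) and $\mathcal{F}$ (typed constants), types $\tau::=\delta\mid\tau\to\tau$. Terms are identified modulo $\alpha$, kept $\beta$-normal, and $\eta$-expanded except that arguments of free variables are kept $\eta$-normal (i.e. are bound variables); a term is written $\lambda x_1,\dots,x_n.h(t_1,\dots,t_m)$ with head $h$. Free variables are written $F,G,H,X,Y,\dots$, bound variables $x,y,z,\dots$. A higher-order pattern is a term where every free variable occurrence is applied to a list of pairwise distinct bound variables; all terms in problems and substitutions are higher-order patterns. Substitutions $\sigma$ are type-preserving maps with finite domain $\mathit{Dom}(\sigma)=\{X\mid X\sigma\neq X\}$, applied postfix ($t\sigma$, capture-avoiding, followed by $\beta$-normalization); $\sigma\vartheta$ means first $\sigma$ then $\vartheta$; $\varepsilon$ is the identity; $\varphi|_V$ is the restriction to $V$; $\mathtt{fv}(t)$ is the set of free variables. Fuzzy setting: T-norm $\wedge=\min$. ${\mathcal R}_A$ is a similarity relation (reflexive, symmetric, min-transitive map to $[0,1]$) on $\mathcal{F}\cup\mathcal{V}$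 with ${\mathcal R}_A(x,y)=0$ for distinct variables, ${\mathcal R}_A(f,g)=0$ for constants of different types, ${\mathcal R}_A(x,f)=0$ for a variable and a constant. It induces ${\mathcal R}$ on terms: on normal forms ${\mathcal R}(a,b)={\mathcal R}_A(a,b)$ for symbols, ${\mathcal R}((t_1\,s_1),(t_2\,s_2))={\mathcal R}(t_1,t_2)\wedge{\mathcal R}(s_1,s_2)$, ${\mathcal R}(\lambda x.t,\lambda y.s)={\mathcal R}(t\{x\mapsto z\},s\{y\mapsto z\})$ for fresh $z$ of the same type, $0$ otherwise. A cut value is $\mu\in(0,1]$. An equation is written $t\simeq^?_{{\mathcal R},\mu}s$; a unification problem is a finite set of equations. A substitution $\sigma$ is an $({\mathcal R},\mu)$-unifier of $\{t_1\simeq^?_{{\mathcal R},\mu}s_1,\dots,t_n\simeq^?_{{\mathcal R},\mu}s_n\}$ with degree $\mathfrak{d}$ if ${\mathcal R}(t_1\sigma,s_1\sigma)\wedge\dots\wedge{\mathcal R}(t_n\sigma,s_n\sigma)=\mathfrak{d}\ge\mu$. Algorithm $\mathsf{HOPSU}$: it works on configurations $P;\sigma;\mathfrak{d}$ ($P$ a problem, $\sigma$ a substitution, $\mathfrak{d}\ge\mu$ a degree) or $\bot$, applying the following rules to a selected equation as long as possible ($\uplus$ is disjoint union): (Abs) $\{\lambda x.t\simeq^?\lambda x.s\}\uplus P;\sigma;\mathfrak{d}\leadsto\{t\simeq^?s\}\cup P;\sigma;\mathfrak{d}$. (Dec) $\{f(t_1,\dots,t_n)\simeq^?g(s_1,\dots,s_n)\}\uplus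 P;\sigma;\mathfrak{d}\leadsto\{t_1\simeq^?s_1,\dots,t_n\simeq^?s_n\}\cup P;\sigma;\mathfrak{d}\wedge{\mathcal R}(f,g)$, where $f,g$ are rigid heads, $n\ge0$, and $\mathfrak{d}\wedge{\mathcal R}(f,g)\ge\mu$. (SV) $\{F(x_1,\dots,x_n)\simeq^?F(y_1,\dots,y_n)\}\uplus P;\sigma;\mathfrak{d}\leadsto P\vartheta;\sigma\vartheta;\mathfrak{d}$, where $\{z_1,\dots,z_m\}=\{x_i\mid x_i=y_i\}$ and $\vartheta=\{F\mapsto\lambda x_1,\dots,x_n.H(z_1,\dots,z_m)\}$ with $H$ fresh. (Ori) $\{a(s_1,\dots,s_m)\simeq^?F(x_1,\dots,x_n)\}\uplus P;\sigma;\mathfrak{d}\leadsto\{F(x_1,\dots,x_n)\simeq^?a(s_1,\dots,s_m)\}\cup P;\sigma;\mathfrak{d}$, where $F$ is free and $a$ is a constant or $a\in\{x_1,\dots,x_n\}$. (LF) $\{F(x_1,\dots,x_n)\simeq^?a(s_1,\dots,s_m)\}\uplus P;\sigma;\mathfrak{d}\leadsto P\vartheta;\sigma\vartheta;\mathfrak{d}$, where $F\notin\mathtt{fv}(a(s_1,\dots,s_m))$, $a$ is a constant, a free variable, or in $\{x_1,\dots,x_n\}$, $\mathsf{VarElim}(F(x_1,\dots,x_n),a(s_1,\dots,s_m))=\varphi$, and $\vartheta=\varphi|_V$ with $V=\{F\}\cup\mathtt{fv}(a(s_1,\dots,s_m))$. (Fail) $\{t\simeq^?s\}\uplus P;\sigma;\mathfrak{d}\leadsto\bot$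 if no other rule applies to the selected equation. $\mathsf{VarElim}(t,s)$ starts from $\{t\simeq^?s\};\varepsilon$ and applies as long as possible: (VE1) $\{F(x_1,\dots,x_n)\simeq^?a(s_1,\dots,s_m)\}\uplus P;\sigma\leadsto\{H_1(x_1,\dots,x_n)\simeq^?s_1,\dots,H_m(x_1,\dots,x_n)\simeq^?s_m\}\cup P;\sigma\vartheta$, where $a$ is a constant or in $\{x_1,\dots,x_n\}$, $\vartheta=\{F\mapsto\lambda x_1,\dots,x_n.a(H_1(x_1,\dots,x_n),\dots,H_m(x_1,\dots,x_n))\}$ with $H_i$ fresh of appropriate types; (VE2) $\{F(x_1,\dots,x_n)\simeq^?G(y_1,\dots,y_m)\}\uplus P;\sigma\leadsto P\vartheta;\sigma\vartheta$, where $\{x_1,\dots,x_n\}\cap\{y_1,\dots,y_m\}=\{z_1,\dots,z_k\}$ and $\vartheta=\{F\mapsto\lambda x_1,\dots,x_n.H(z_1,\dots,z_k),G\mapsto\lambda y_1,\dots,y_m.H(z_1,\dots,z_k)\}$ with $H$ fresh. If it ends in $\emptyset;\varphi$, then $\mathsf{VarElim}(t,s)=\varphi$. *)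

(* Defs.v *)
From Stdlib Require Import Reals List Arith Bool.
Import ListNotations.

Inductive ty : Type := Base (d : nat) | Arr (a b : ty).

Definition ty_eq_dec : forall a b : ty, {a = b} + {a <> b}.
Proof. decide equality; apply Nat.eq_dec. Defined.

Fixpoint ty_args (t : ty) : list ty :=
  match t with Base _ => [] | Arr a b => a :: ty_args b end.
Fixpoint ty_res (t : ty) : nat :=
  match t with Base d => d | Arr _ b => ty_res b end.
Definition arrows (l : list ty) (r : ty) : ty := fold_right Arr r l.

Inductive fvar : Type := FV (name : nat) (fty : ty).
Definition fv_ty (X : fvar) : ty := match X with FV _ t => t end.
Definition fvar_eq_dec : forall a b : fvar, {a = b} + {a <> b}.
Proof. decide equality; [apply ty_eq_dec | apply Nat.eq_dec]. Defined.

Inductive const : Type := CN (name : nat) (cty : ty).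
Definition c_ty (c : const) : ty := match c with CN _ t => t end.

(* ---------- terms (beta-normal, eta-long, locally nameless/de Bruijn) ----------
   Lam a t        : lambda x:a. t     (bound variables are de Bruijn indices)
   Rig h [t1..tm] : h(t1,..,tm) with rigid head h (bound variable or constant)
   Flex F [y1..yn]: F(y1,..,yn), free variable F applied to (eta-normal)
                    bound variables y_i (de Bruijn indices).              *)
Inductive rhead : Type := Bv (i : nat) | Cn (c : const).
Inductive tm : Type :=
| Lam (a : ty) (t : tm)
| Rig (h : rhead) (ts : list tm)
| Flex (F : fvar) (xs : list nat).

Definition lams (l : list ty) (b : tm) : tm := fold_right Lam b l.

(* Well-typed higher-order pattern in eta-long beta-normal form, in a
   context Gamma of bound-variable types (head of list = index 0). *)
Inductive wt (G : list ty) : tm -> ty -> Prop :=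
| wt_lam : forall a t b, wt (a :: G) t b -> wt G (Lam a t) (Arr a b)
| wt_con : forall c ts,
    Forall2 (wt G) ts (ty_args (c_ty c)) ->
    wt G (Rig (Cn c) ts) (Base (ty_res (c_ty c)))
| wt_bv : forall i T ts,
    nth_error G i = Some T ->
    Forall2 (wt G) ts (ty_args T) ->
    wt G (Rig (Bv i) ts) (Base (ty_res T))
| wt_flex : forall F ys,
    NoDup ys ->
    Forall2 (fun y a => nth_error G y = Some a) ys (ty_args (fv_ty F)) ->
    wt G (Flex F ys) (Base (ty_res (fv_ty F))).

Definition hopattern (t : tm) (T : ty) : Prop := wt [] t T.

Fixpoint fv (t : tm) : list fvar :=
  match t with
  | Lam _ b => fv b
  | Rig _ ts => flat_map fv ts
  | Flex F _ => [F]
  end.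

Definition up (r : nat -> nat) (k : nat) : nat :=
  match k with 0 => 0 | S k' => S (r k') end.

Fixpoint rename (r : nat -> nat) (t : tm) : tm :=
  match t with
  | Lam a b => Lam a (rename (up r) b)
  | Rig (Bv i) ts => Rig (Bv (r i)) (map (rename r) ts)
  | Rig (Cn c) ts => Rig (Cn c) (map (rename r) ts)
  | Flex F ys => Flex F (map r ys)
  end.

Fixpoint strip (n : nat) (t : tm) : tm :=
  match n, t with
  | S n', Lam _ b => strip n' b
  | _, _ => t
  end.

(* beta-normal form of (lambda x1..xn. u) y1 .. yn, for bound variables y_i:
   a renaming of x_i to y_i (x_i has de Bruijn index n-i in u). *)
Definition inst (u : tm) (ys : list nat) : tm :=
  let n := length ys in
  rename (fun k => if k <? n then nth (n - 1 - k) ys 0 else k - n) (strip n u).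

(* substitutions: every free variable is mapped to a closed term of its
   type (in eta-long form); the identity maps X to its eta-expansion *)
Definition subst := fvar -> tm.

(* eta-long form of H(x1,..,xn) for bound variables xs (current context):
   lambda z1..zk. H(xs, z1..zk) *)
Definition long_app (H : fvar) (xs : list nat) : tm :=
  let zs := skipn (length xs) (ty_args (fv_ty H)) in
  let k := length zs in
  lams zs (Flex H (map (fun x => x + k) xs ++ rev (seq 0 k))).

Definition eta (X : fvar) : tm := long_app X [].

Definition eps : subst := fun X => eta X.

(* t sigma  (capture-avoiding application followed by beta-normalization;
   on patterns beta-normalization reduces to renaming) *)
Fixpoint app_sub (s : subst) (t : tm) : tm :=
  match t with
  | Lam a b => Lam a (app_sub s b)
  | Rig h ts => Rig h (map (app_sub s) ts)
  | Flex F ys => inst (s F) ys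
  end.

(* composition: sigma theta = first sigma, then theta *)
Definition comp (s th : subst) : subst := fun X => app_sub th (s X).

Definition restrict (s : subst) (V : list fvar) : subst :=
  fun X => if in_dec fvar_eq_dec X V then s X else eta X.

Definition bind1 (F : fvar) (u : tm) : subst :=
  fun X => if fvar_eq_dec X F then u else eta X.

Definition bind2 (F : fvar) (u : tm) (G : fvar) (v : tm) : subst :=
  fun X => if fvar_eq_dec X F then u else if fvar_eq_dec X G then v else eta X.

Definition Dom (s : subst) (X : fvar) : Prop := s X <> eta X.

Open Scope R_scope.

(* R_A restricted to constants; on variables it is forced to be the identity
   (1 on equal variables, 0 on distinct ones, 0 between a variable and a constant). *)
Definition similarity (RA : const -> const -> R) : Prop :=
  (forall c d, 0 <= RA c d <= 1) /\
  (forall c, RA c c = 1) /\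
  (forall c d, RA c d = RA d c) /\
  (forall c d e, Rmin (RA c d) (RA d e) <= RA c e) /\
  (forall c d, c_ty c <> c_ty d -> RA c d = 0).

Definition Rh (RA : const -> const -> R) (f g : rhead) : R :=
  match f, g with
  | Bv i, Bv j => if Nat.eqb i j then 1 else 0
  | Cn c, Cn d => RA c d
  | _, _ => 0
  end.

Fixpoint Rt (RA : const -> const -> R) (t s : tm) {struct t} : R :=
  match t, s with
  | Lam a t', Lam b s' => if ty_eq_dec a b then Rt RA t' s' else 0
  | Rig h ts, Rig g ss =>
      Rmin (Rh RA h g)
        ((fix go (l1 l2 : list tm) : R :=
            match l1, l2 with
            | [], [] => 1
            | t1 :: l1', s1 :: l2' => Rmin (Rt RA t1 s1) (go l1' l2')
            | _, _ => 0
            end) ts ss)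
  | Flex F xs, Flex G ys =>
      if fvar_eq_dec F G then
        (if list_eq_dec Nat.eq_dec xs ys then 1 else 0) else 0
  | _, _ => 0
  end.

Definition unifier_deg (RA : const -> const -> R) (mu : R) (s : subst) (t u : tm) (d : R) : Prop :=
  Rt RA (app_sub s t) (app_sub s u) = d /\ mu <= d.

(* An equation  t =?= s  between terms living under the bound-variable
   context Gamma (introduced by the (Abs) rule). *)
Inductive eqn : Type := Eqn (Gamma : list ty) (l r : tm).

Definition app_eq (s : subst) (e : eqn) : eqn :=
  match e with Eqn G l r => Eqn G (app_sub s l) (app_sub s r) end.

Definition fv_eqn (e : eqn) : list fvar :=
  match e with Eqn _ l r => fv l ++ fv r end.
Definition fv_prob (P : list eqn) : list fvar := flat_map fv_eqn P.

(* Problems are finite sets; represented by duplicate-free lists.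
   same_set P' Q : P' is the set of elements of Q. *)
Definition same_set (P' Q : list eqn) : Prop :=
  NoDup P' /\ (forall e, In e P' <-> In e Q).

Definition fresh (H : fvar) (P : list eqn) (s : subst) : Prop :=
  ~ In H (fv_prob P) /\ s H = eta H /\ (forall X, X <> H -> ~ In H (fv (s X))).

Fixpoint index_of (x : nat) (l : list nat) : nat :=
  match l with
  | [] => 0
  | y :: l' => if Nat.eqb x y then 0 else S (index_of x l')
  end.

Definition common (xs ys : list nat) : list nat :=
  filter (fun x => existsb (Nat.eqb x) ys) xs.

Definition ve2_subst (F : fvar) (xs : list nat) (G : fvar) (ys : list nat) (H : fvar) : subst :=
  let zs := common xs ys in
  bind2 F (lams (ty_args (fv_ty F))
             (Flex H (map (fun z => length xs - 1 - index_of z xs) zs)%nat))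
        G (lams (ty_args (fv_ty G))
             (Flex H (map (fun z => length ys - 1 - index_of z ys) zs)%nat)).

(* Steps of VarElim.  Pout, sout: the surrounding HOPSU configuration, with
   respect to which the fresh variables must also be fresh. *)
Inductive ve_step (Pout : list eqn) (sout : subst) :
    list eqn * subst -> list eqn * subst -> Prop :=
| VE_Abs : forall P1 P2 G a t s phi P',
    same_set P' (Eqn (a :: G) t s :: P1 ++ P2) ->
    ve_step Pout sout (P1 ++ Eqn G (Lam a t) (Lam a s) :: P2, phi) (P', phi)
| VE1 : forall P1 P2 G F xs a ss phi a' Ta Hs P',
    ((exists c, a = Cn c /\ a' = Cn c /\ Ta = c_ty c) \/
     (exists i j, a = Bv i /\ nth_error xs j = Some i /\
                  a' = Bv (length xs - 1 - j)%nat /\ nth_error G i = Some Ta)) ->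
    Forall2 (fun H Ti => fv_ty H = arrows (ty_args (fv_ty F)) Ti) Hs (ty_args Ta) ->
    length Hs = length ss ->
    NoDup Hs ->
    Forall (fun H => fresh H ((P1 ++ Eqn G (Flex F xs) (Rig a ss) :: P2) ++ Pout) phi
                     /\ fresh H [] sout) Hs ->
    same_set P' (map (fun p => Eqn G (long_app (fst p) xs) (snd p)) (combine Hs ss)
                 ++ P1 ++ P2) ->
    ve_step Pout sout
      (P1 ++ Eqn G (Flex F xs) (Rig a ss) :: P2, phi)
      (P', comp phi (bind1 F (lams (ty_args (fv_ty F))
                     (Rig a' (map (fun H => long_app H (rev (seq 0 (length xs)))) Hs)))))
| VE2 : forall P1 P2 G F xs Gv ys phi H P',
    fv_ty H = arrows (map (fun z => nth (index_of z xs) (ty_args (fv_ty F)) (Base 0))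
                          (common xs ys))
                     (Base (ty_res (fv_ty F))) ->
    fresh H ((P1 ++ Eqn G (Flex F xs) (Flex Gv ys) :: P2) ++ Pout) phi ->
    fresh H [] sout ->
    same_set P' (map (app_eq (ve2_subst F xs Gv ys H)) (P1 ++ P2)) ->
    ve_step Pout sout
      (P1 ++ Eqn G (Flex F xs) (Flex Gv ys) :: P2, phi)
      (P', comp phi (ve2_subst F xs Gv ys H)).

Inductive star {A : Type} (st : A -> A -> Prop) : A -> A -> Prop :=
| star_refl : forall x, star st x x
| star_step : forall x y z, st x y -> star st y z -> star st x z.

Definition VarElim (Pout : list eqn) (sout : subst) (G : list ty) (l r : tm) (phi : subst) : Prop :=
  star (ve_step Pout sout) ([Eqn G l r], eps) ([], phi).

Inductive cfg : Type :=
| Cfg (P : list eqn) (s : subst) (d : R)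
| Bot.

Definition agree_pos (xs ys : list nat) : list nat :=
  filter (fun j => Nat.eqb (nth j xs 0%nat) (nth j ys 0%nat)) (seq 0 (length xs)).

Definition sv_subst (F : fvar) (xs ys : list nat) (H : fvar) : subst :=
  bind1 F (lams (ty_args (fv_ty F))
             (Flex H (map (fun j => length xs - 1 - j) (agree_pos xs ys))%nat)).

(* hrule RA mu P1 e P2 s d c' : a rule other than (Fail) transforms the
   configuration (P1 ++ e :: P2); s; d, with selected equation e, into c'. *)
Inductive hrule (RA : const -> const -> R) (mu : R)
    (P1 : list eqn) (e : eqn) (P2 : list eqn) (s : subst) (d : R) : cfg -> Prop :=
| H_Abs : forall G a t u P',
    e = Eqn G (Lam a t) (Lam a u) ->
    same_set P' (Eqn (a :: G) t u :: P1 ++ P2) ->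
    hrule RA mu P1 e P2 s d (Cfg P' s d)
| H_Dec : forall G f g ts ss P',
    e = Eqn G (Rig f ts) (Rig g ss) ->
    length ts = length ss ->
    mu <= Rmin d (Rh RA f g) ->
    same_set P' (map (fun p => Eqn G (fst p) (snd p)) (combine ts ss) ++ P1 ++ P2) ->
    hrule RA mu P1 e P2 s d (Cfg P' s (Rmin d (Rh RA f g)))
| H_SV : forall G F xs ys H P',
    e = Eqn G (Flex F xs) (Flex F ys) ->
    length xs = length ys ->
    fv_ty H = arrows (map (fun j => nth j (ty_args (fv_ty F)) (Base 0)) (agree_pos xs ys))
                     (Base (ty_res (fv_ty F))) ->
    fresh H (P1 ++ e :: P2) s ->
    same_set P' (map (app_eq (sv_subst F xs ys H)) (P1 ++ P2)) ->
    hrule RA mu P1 e P2 s d (Cfg P' (comp s (sv_subst F xs ys H)) d)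
| H_Ori : forall G a ss F xs P',
    e = Eqn G (Rig a ss) (Flex F xs) ->
    ((exists c, a = Cn c) \/ (exists i, a = Bv i /\ In i xs)) ->
    same_set P' (Eqn G (Flex F xs) (Rig a ss) :: P1 ++ P2) ->
    hrule RA mu P1 e P2 s d (Cfg P' s d)
| H_LF : forall G F xs u phi P',
    e = Eqn G (Flex F xs) u ->
    ((exists c ss, u = Rig (Cn c) ss) \/
     (exists i ss, u = Rig (Bv i) ss /\ In i xs) \/
     (exists Gv ys, u = Flex Gv ys)) ->
    ~ In F (fv u) ->
    VarElim (P1 ++ e :: P2) s G (Flex F xs) u phi ->
    same_set P' (map (app_eq (restrict phi (F :: fv u))) (P1 ++ P2)) ->
    hrule RA mu P1 e P2 s d (Cfg P' (comp s (restrict phi (F :: fv u))) d).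

Inductive hstep (RA : const -> const -> R) (mu : R) : cfg -> cfg -> Prop :=
| hstep_rule : forall P1 e P2 s d c',
    hrule RA mu P1 e P2 s d c' ->
    hstep RA mu (Cfg (P1 ++ e :: P2) s d) c'
| hstep_fail : forall P1 e P2 s d,
    (forall c', ~ hrule RA mu P1 e P2 s d c') ->
    hstep RA mu (Cfg (P1 ++ e :: P2) s d) Bot.

Definition hopsu_init (t s : tm) : cfg := Cfg [Eqn [] t s] eps 1.

(* Main.v *)
Require Import Defs.
From Stdlib Require Import Reals List Lia Arith Lra.
Import ListNotations.

Local Open Scope nat_scope.

Section TmInd.
Variable P : tm -> Prop.
Hypothesis fl : forall a t, P t -> P (Lam a t).
Hypothesis fr : forall h ts, Forall P ts -> P (Rig h ts).
Hypothesis ff : forall F xs, P (Flex F xs).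
Fixpoint tm_ind' (t : tm) : P t :=
  match t with
  | Lam a b => fl a b (tm_ind' b)
  | Rig h ts => fr h ts ((fix go (l : list tm) : Forall P l :=
        match l with [] => Forall_nil _ | x :: l' => Forall_cons x (tm_ind' x) (go l') end) ts)
  | Flex F xs => ff F xs
  end.
End TmInd.

Definition arity (X : fvar) : nat := length (ty_args (fv_ty X)).

Inductive bnd : nat -> tm -> Prop :=
| bnd_lam k a t : bnd (S k) t -> bnd k (Lam a t)
| bnd_bv k i ts : i < k -> Forall (bnd k) ts -> bnd k (Rig (Bv i) ts)
| bnd_cn k c ts : Forall (bnd k) ts -> bnd k (Rig (Cn c) ts)
| bnd_flex k F ys : Forall (fun y => y < k) ys -> bnd k (Flex F ys).

Inductive arq : tm -> Prop :=
| arq_lam a t : arq t -> arq (Lam a t)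
| arq_rig h ts : Forall arq ts -> arq (Rig h ts)
| arq_flex F ys : length ys = arity F -> arq (Flex F ys).

Fixpoint lamc (t : tm) : nat := match t with Lam _ b => S (lamc b) | _ => 0 end.

Definition closed (th : subst) := forall X, bnd 0 (th X).
Definition wf (r : subst) := forall X, bnd 0 (r X) /\ arity X <= lamc (r X) /\ arq (r X).

Lemma rename_ext : forall t f g, (forall i, f i = g i) -> rename f t = rename g t.
Proof.
  induction t using tm_ind'; intros f g Hfg; simpl.
  - f_equal. apply IHt. intros [|i]; simpl; auto.
  - destruct h; [rewrite Hfg|]; f_equal; apply map_ext_in; intros x Hx;
      rewrite Forall_forall in H; apply H; auto.
  - f_equal. apply map_ext; auto.
Qed.

Lemma rename_rename : forall t f g, rename f (rename g t) = rename (fun i => f (g i)) t.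
Proof.
  induction t using tm_ind'; intros f g; simpl.
  - f_equal. rewrite IHt. apply rename_ext. intros [|i]; simpl; auto.
  - rewrite Forall_forall in H.
    destruct h; simpl; f_equal; rewrite map_map; apply map_ext_in; intros; apply H; auto.
  - f_equal. apply map_map.
Qed.

Lemma rename_ext_bnd : forall t k f g, bnd k t -> (forall i, i < k -> f i = g i) ->
  rename f t = rename g t.
Proof.
  induction t using tm_ind'; intros k f g Hb Hfg; inversion Hb; subst; simpl.
  - f_equal. apply (IHt (S k)); auto. intros [|i] Hi; simpl; auto.
    f_equal. apply Hfg. lia.
  - rewrite Hfg by auto. f_equal. apply map_ext_in. intros x Hx.
    rewrite Forall_forall in H, H4. eapply H; eauto.
  - f_equal. apply map_ext_in. intros x Hx.
    rewrite Forall_forall in *. eapply H; eauto.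
  - f_equal. apply map_ext_in. intros x Hx. rewrite Forall_forall in *. auto.
Qed.

Lemma bnd_mono : forall t k k', bnd k t -> k <= k' -> bnd k' t.
Proof.
  induction t using tm_ind'; intros k k' Hb Hk; inversion Hb; subst.
  - constructor. eapply IHt; eauto. lia.
  - constructor. lia. rewrite Forall_forall in *. intros; eapply H; eauto.
  - constructor. rewrite Forall_forall in *. intros; eapply H; eauto.
  - constructor. rewrite Forall_forall in *. intros x Hx; match goal with H : forall y, In y xs -> _ |- _ => specialize (H x Hx) end; lia.
Qed.

Lemma bnd_rename : forall t n k f, bnd n t -> (forall i, i < n -> f i < k) ->
  bnd k (rename f t).
Proof.
  induction t using tm_ind'; intros n k f Hb Hf; inversion Hb; subst; simpl.
  - constructor. apply (IHt (S n)); auto. intros [|i] Hi; simpl; [lia|].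
    specialize (Hf i). lia.
  - constructor. auto. rewrite Forall_forall in *. intros x Hx.
    apply in_map_iff in Hx. destruct Hx as [y [<- Hy]]. eapply H; eauto.
  - constructor. rewrite Forall_forall in *. intros x Hx.
    apply in_map_iff in Hx. destruct Hx as [y [<- Hy]]. eapply H; eauto.
  - constructor. rewrite Forall_forall in *. intros x Hx.
    apply in_map_iff in Hx. destruct Hx as [y [<- Hy]]. auto.
Qed.

Lemma bnd_strip : forall m w k, bnd k w -> bnd (k + m) (strip m w).
Proof.
  induction m; intros w k Hb; simpl.
  - rewrite Nat.add_0_r. auto.
  - destruct w; try (eapply bnd_mono; eauto; lia).
    inversion Hb; subst. replace (k + S m) with (S k + m) by lia. auto.
Qed.

Lemma inst_rename : forall w zs r, bnd 0 w -> rename r (inst w zs) = inst w (map r zs).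
Proof.
  intros w zs r Hw. unfold inst; cbv zeta. rewrite length_map, rename_rename.
  apply rename_ext_bnd with (k := length zs).
  - apply (bnd_strip _ _ 0). auto.
  - intros i Hi. assert (E : (i <? length zs) = true) by (apply Nat.ltb_lt; auto).
    rewrite E. rewrite (@nth_indep nat (map r zs) (length zs - 1 - i) 0 (r 0)) by (rewrite length_map; lia).
    rewrite map_nth. auto.
Qed.

Lemma app_sub_rename : forall t th r, closed th ->
  app_sub th (rename r t) = rename r (app_sub th t).
Proof.
  induction t using tm_ind'; intros th r Hc; simpl.
  - f_equal. auto.
  - rewrite Forall_forall in H.
    destruct h; simpl; f_equal; rewrite !map_map; apply map_ext_in; intros; apply H; auto.
  - rewrite inst_rename; auto.
Qed.

Lemma strip_app_sub : forall m w th, m <= lamc w ->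
  app_sub th (strip m w) = strip m (app_sub th w).
Proof.
  induction m; intros w th Hm; simpl; auto.
  destruct w; simpl in Hm; try lia. simpl. apply IHm. lia.
Qed.

Lemma app_sub_comp : forall t r th, closed th -> arq t ->
  (forall X, arity X <= lamc (r X)) ->
  app_sub th (app_sub r t) = app_sub (Defs.comp r th) t.
Proof.
  induction t using tm_ind'; intros r th Hc Ha Hr; inversion Ha; subst; simpl.
  - f_equal. auto.
  - rewrite map_map. f_equal. rewrite Forall_forall in *. apply map_ext_in. intros; apply H; auto.
  - unfold inst, Defs.comp; cbv zeta. rewrite app_sub_rename by auto. f_equal.
    apply strip_app_sub. match goal with H : length xs = _ |- _ => rewrite H end. auto.
Qed.

Lemma bnd_app_sub : forall t k th, closed th -> bnd k t -> bnd k (app_sub th t).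
Proof.
  induction t using tm_ind'; intros k th Hc Hb; inversion Hb; subst; simpl.
  - constructor. auto.
  - constructor. auto. rewrite Forall_forall in *. intros x Hx.
    apply in_map_iff in Hx. destruct Hx as [y [<- Hy]]. eapply H; eauto.
  - constructor. rewrite Forall_forall in *. intros x Hx.
    apply in_map_iff in Hx. destruct Hx as [y [<- Hy]]. eapply H; eauto.
  - unfold inst. apply bnd_rename with (n := 0 + length xs).
    + apply bnd_strip. apply Hc.
    + intros i Hi. assert (E : (i <? length xs) = true) by (apply Nat.ltb_lt; simpl in Hi; auto).
      rewrite E. rewrite Forall_forall in *. match goal with H : forall y, In y xs -> _ |- _ => apply H end. apply nth_In. simpl in Hi; lia.
Qed.

Lemma arq_rename : forall t f, arq t -> arq (rename f t).
Proof.
  induction t using tm_ind'; intros f Ha; inversion Ha; subst; simpl.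
  - constructor; auto.
  - destruct h; constructor; rewrite Forall_forall in *; intros x Hx;
      apply in_map_iff in Hx; destruct Hx as [y [<- Hy]]; auto.
  - constructor. rewrite length_map. auto.
Qed.

Lemma arq_strip : forall m t, arq t -> arq (strip m t).
Proof.
  induction m; intros t Ha; simpl; auto. destruct t; auto. inversion Ha; subst; auto.
Qed.

Lemma arq_app_sub : forall t th, (forall X, arq (th X)) -> arq t -> arq (app_sub th t).
Proof.
  induction t using tm_ind'; intros th Hth Ha; inversion Ha; subst; simpl.
  - constructor; auto.
  - constructor. rewrite Forall_forall in *. intros x Hx.
    apply in_map_iff in Hx. destruct Hx as [y [<- Hy]]. auto.
  - unfold inst. apply arq_rename, arq_strip, Hth.
Qed.

Lemma lamc_app_sub : forall w th, lamc w <= lamc (app_sub th w).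
Proof. induction w; intros th; simpl; try lia. specialize (IHw th). lia. Qed.

Lemma wf_comp : forall s r, wf s -> wf r -> wf (Defs.comp s r).
Proof.
  intros s r Hs Hr X. destruct (Hs X) as [A [B C]]. unfold Defs.comp. split; [|split].
  - apply bnd_app_sub; auto. intros Y; apply Hr.
  - eapply Nat.le_trans; [exact B| apply lamc_app_sub].
  - apply arq_app_sub; auto. intros Y; apply Hr.
Qed.

Local Open Scope nat_scope.

Fixpoint upn (k : nat) (f : nat -> nat) : nat -> nat :=
  match k with 0 => f | S k' => upn k' (Defs.up f) end.

Lemma upn_eq : forall k f j, upn k f j = if j <? k then j else f (j - k) + k.
Proof.
  induction k; intros f j; simpl. rewrite Nat.sub_0_r; lia.
  rewrite IHk. destruct (j <? k) eqn:E1; destruct (j <? S k) eqn:E2;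
    apply Nat.ltb_lt in E1 || apply Nat.ltb_nlt in E1;
    apply Nat.ltb_lt in E2 || apply Nat.ltb_nlt in E2; try lia.
  - replace (j - k) with 0 by lia. simpl. lia.
  - replace (j - k) with (S (j - S k)) by lia. simpl. lia.
Qed.

Lemma upn_lt : forall k f j, j < k -> upn k f j = j.
Proof. intros. rewrite upn_eq. destruct (j <? k) eqn:E; auto. apply Nat.ltb_nlt in E; lia. Qed.

Lemma upn_ge : forall k f j, upn k f (j + k) = f j + k.
Proof.
  induction k; intros f j; simpl; [rewrite !Nat.add_0_r; auto|].
  replace (j + S k) with (S j + k) by lia. rewrite IHk. simpl. lia.
Qed.

Lemma rename_lams : forall l b f, rename f (lams l b) = lams l (rename (upn (length l) f) b).
Proof. induction l; intros b f; simpl; auto. f_equal. apply IHl. Qed.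

Lemma strip_lams : forall l b, strip (length l) (lams l b) = b.
Proof. induction l; intros b; simpl; auto. Qed.

Lemma lamc_lams : forall l b, lamc (lams l b) = length l + lamc b.
Proof. induction l; intros b; simpl; auto. Qed.

Lemma bnd_lams : forall l b k, bnd (k + length l) b -> bnd k (lams l b).
Proof.
  induction l; intros b k H; simpl in *. rewrite Nat.add_0_r in H; auto.
  constructor. apply IHl. replace (S k + length l) with (k + S (length l)) by lia. auto.
Qed.

Lemma fv_lams : forall l b, fv (lams l b) = fv b.
Proof. induction l; intros b; simpl; auto. Qed.

Lemma arq_lams : forall l b, arq b -> arq (lams l b).
Proof. induction l; intros b H; simpl; auto. constructor; auto. Qed.

Lemma app_sub_lams : forall th l b, app_sub th (lams l b) = lams l (app_sub th b).
Proof. induction l; intros b; simpl; auto. f_equal; auto. Qed.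

Lemma rev_seq_nth : forall ys : list nat,
  map (fun j => nth (length ys - 1 - j) ys 0) (rev (seq 0 (length ys))) = ys.
Proof.
  induction ys as [|y ys IH]; [reflexivity|].
  change (length (y :: ys)) with (S (length ys)).
  rewrite seq_S, rev_app_distr. simpl.
  replace (length ys - 0 - length ys) with 0 by lia. f_equal.
  rewrite <- IH at 2. apply map_ext_in. intros j Hj.
  apply in_rev in Hj. apply in_seq in Hj.
  replace (length ys - 0 - j) with (S (length ys - 1 - j)) by lia. auto.
Qed.

Lemma inst_map : forall ys k, length ys = k ->
  map (fun j => if j <? k then nth (k - 1 - j) ys 0 else j - k) (rev (seq 0 k)) = ys.
Proof.
  intros ys k <-. rewrite <- (rev_seq_nth ys) at 2. apply map_ext_in.
  intros j Hj. apply in_rev, in_seq in Hj.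
  assert (E : (j <? length ys) = true) by (apply Nat.ltb_lt; lia). rewrite E. auto.
Qed.

Lemma eps_eq : forall X, eps X = lams (ty_args (fv_ty X)) (Flex X (rev (seq 0 (arity X)))).
Proof. intros X. unfold eps, eta, long_app. simpl. reflexivity. Qed.

Lemma wf_eps : wf eps.
Proof.
  intros X. rewrite eps_eq. split; [|split].
  - apply bnd_lams. constructor. rewrite Forall_forall. intros y Hy.
    apply in_rev, in_seq in Hy. unfold arity in Hy. lia.
  - rewrite lamc_lams. unfold arity. lia.
  - apply arq_lams. constructor. rewrite length_rev, length_seq. auto.
Qed.

Lemma app_sub_eps : forall t, arq t -> app_sub eps t = t.
Proof.
  induction t using tm_ind'; intros Ha; inversion Ha; subst; simpl.
  - f_equal; auto.
  - f_equal. rewrite Forall_forall in *. rewrite <- map_id. apply map_ext_in. auto.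
  - rewrite eps_eq. unfold inst; cbv zeta.
    match goal with H : length xs = _ |- _ => rename H into Hl end.
    rewrite Hl. unfold arity in *. rewrite strip_lams. simpl.
    f_equal. apply inst_map. auto.
Qed.

Lemma fv_rename : forall t f, fv (rename f t) = fv t.
Proof.
  induction t using tm_ind'; intros f; simpl; auto.
  rewrite Forall_forall in H.
  destruct h; simpl; induction ts; simpl; auto; rewrite H by (simpl; auto);
    f_equal; apply IHts; intros; apply H; simpl; auto.
Qed.

Lemma fv_strip : forall m t, fv (strip m t) = fv t.
Proof. induction m; intros t; simpl; auto. destruct t; simpl; auto. Qed.

Lemma fv_inst : forall w ys, fv (inst w ys) = fv w.
Proof. intros. unfold inst; cbv zeta. rewrite fv_rename, fv_strip. auto. Qed.

Lemma app_sub_agree : forall t r1 r2, (forall X, In X (fv t) -> r1 X = r2 X) ->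
  app_sub r1 t = app_sub r2 t.
Proof.
  induction t using tm_ind'; intros r1 r2 Hr; simpl in *.
  - f_equal; auto.
  - f_equal. rewrite Forall_forall in H. apply map_ext_in. intros x Hx.
    apply H; auto. intros X HX. apply Hr. apply in_flat_map. eauto.
  - rewrite Hr; auto.
Qed.

Lemma fv_app_sub : forall t r X, In X (fv (app_sub r t)) ->
  exists Y, In Y (fv t) /\ In X (fv (r Y)).
Proof.
  induction t using tm_ind'; intros r X HX; simpl in *.
  - auto.
  - rewrite Forall_forall in H. apply in_flat_map in HX.
    destruct HX as [x [Hx HXx]]. apply in_map_iff in Hx. destruct Hx as [y [<- Hy]].
    destruct (H y Hy r X HXx) as [Y [HY1 HY2]]. exists Y. split; auto.
    apply in_flat_map. eauto.
  - rewrite fv_inst in HX. eauto.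
Qed.

Local Open Scope R_scope.

Ltac rmin := unfold Rmin in *; repeat (destruct Rle_dec); lra.

Section RtL.
Variable RA : const -> const -> R.
Hypothesis HS : similarity RA.

Fixpoint Rlist (l1 l2 : list tm) : R :=
  match l1, l2 with
  | [], [] => 1
  | t1 :: l1', s1 :: l2' => Rmin (Rt RA t1 s1) (Rlist l1' l2')
  | _, _ => 0
  end.

Lemma Rt_rig : forall h g ts ss, Rt RA (Rig h ts) (Rig g ss) = Rmin (Rh RA h g) (Rlist ts ss).
Proof. reflexivity. Qed.

Lemma Rh_bounds : forall h g, 0 <= Rh RA h g <= 1.
Proof.
  destruct HS as [H1 _]. intros [i|c] [j|d]; simpl; try lra.
  destruct (Nat.eqb i j); lra. apply H1.
Qed.

Lemma Rt_bounds : forall t s, 0 <= Rt RA t s <= 1.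
Proof.
  induction t using tm_ind'; intros s; destruct s; try (simpl; lra).
  - simpl. destruct (ty_eq_dec a a0); auto; lra.
  - rewrite Rt_rig. assert (0 <= Rlist ts ts0 <= 1).
    { revert ts0. induction ts; intros [|s ss]; simpl; try lra.
      inversion H as [|x l Hx Hl]; subst. specialize (IHts Hl ss). specialize (Hx s). rmin. }
    pose proof (Rh_bounds h h0). rmin.
  - simpl. destruct fvar_eq_dec; [destruct list_eq_dec|]; lra.
Qed.

Lemma Rt_refl : forall t, Rt RA t t = 1.
Proof.
  destruct HS as [_ [H2 _]].
  induction t using tm_ind'.
  - simpl. destruct (ty_eq_dec a a); congruence.
  - rewrite Rt_rig. assert (Rh RA h h = 1) by (destruct h as [i|c]; simpl; [destruct (PeanoNat.Nat.eqb_spec i i); [reflexivity|congruence] | apply H2]).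
    assert (Rlist ts ts = 1).
    { induction ts; simpl; auto. inversion H as [|x l Hx Hl]; subst. rewrite Hx, IHts by auto. rmin. }
    rewrite H0, H1. rmin.
  - simpl. destruct fvar_eq_dec; [destruct list_eq_dec|]; congruence.
Qed.

Lemma Rt_sym : forall t s, Rt RA t s = Rt RA s t.
Proof.
  destruct HS as [_ [_ [H3 _]]].
  induction t using tm_ind'; intros s; destruct s; try reflexivity.
  - simpl. destruct (ty_eq_dec a a0), (ty_eq_dec a0 a); subst; auto; congruence.
  - rewrite !Rt_rig. f_equal.
    + destruct h, h0; simpl; auto. rewrite PeanoNat.Nat.eqb_sym; auto.
    + revert ts0. induction ts; intros [|s ss]; simpl; auto.
      inversion H as [|x l Hx Hl]; subst. rewrite Hx, IHts; auto.
  - simpl. destruct (fvar_eq_dec F F0), (fvar_eq_dec F0 F); subst; try congruence.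
    destruct (list_eq_dec Nat.eq_dec xs xs0), (list_eq_dec Nat.eq_dec xs0 xs); subst; congruence.
Qed.

Definition Req (th : subst) (e : eqn) : R :=
  match e with Eqn _ l r => Rt RA (app_sub th l) (app_sub th r) end.

Fixpoint Rp (th : subst) (P : list eqn) : R :=
  match P with [] => 1 | e :: P' => Rmin (Req th e) (Rp th P') end.

Lemma Req_bounds : forall th e, 0 <= Req th e <= 1.
Proof. intros th [G l r]; simpl; apply Rt_bounds. Qed.

Lemma Rp_bounds : forall th P, 0 <= Rp th P <= 1.
Proof. induction P; simpl; try lra. pose proof (Req_bounds th a). rmin. Qed.

Lemma Rp_mem : forall th P e, In e P -> Rp th P <= Req th e.
Proof.
  induction P; intros e Hin; simpl in *; [tauto|].
  destruct Hin as [<-|Hin]. apply Rmin_l.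
  eapply Rle_trans; [apply Rmin_r| auto].
Qed.

Lemma Rp_incl : forall th P Q, (forall e, In e P -> In e Q) -> Rp th Q <= Rp th P.
Proof.
  induction P; intros Q HPQ; simpl. apply Rp_bounds.
  apply Rmin_glb. apply Rp_mem, HPQ; simpl; auto. apply IHP. intros; apply HPQ; simpl; auto.
Qed.

Lemma Rp_same : forall th P Q, (forall e, In e P <-> In e Q) -> Rp th P = Rp th Q.
Proof.
  intros. apply Rle_antisym; apply Rp_incl; intros; apply H; auto.
Qed.

Lemma Rp_app : forall th P Q, Rp th (P ++ Q) = Rmin (Rp th P) (Rp th Q).
Proof.
  induction P; intros Q; simpl. pose proof (Rp_bounds th Q); rmin.
  rewrite IHP. rewrite Rmin_assoc. auto.
Qed.

Lemma Rp_sel : forall th P1 e P2, Rp th (P1 ++ e :: P2) = Rmin (Req th e) (Rp th (P1 ++ P2)).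
Proof.
  intros. rewrite (Rp_same th (P1 ++ e :: P2) (e :: P1 ++ P2)). reflexivity.
  intros x. rewrite !in_app_iff. simpl. rewrite in_app_iff. tauto.
Qed.

End RtL.

Local Open Scope nat_scope.

Fixpoint hd_var (t : tm) : option fvar :=
  match t with Lam _ b => hd_var b | Flex F _ => Some F | Rig _ _ => None end.

Definition arqe (e : eqn) : Prop := match e with Eqn _ l r => arq l /\ arq r end.
Definition unif (th : subst) (e : eqn) : Prop :=
  match e with Eqn _ l r => app_sub th l = app_sub th r end.

Definition occ1 (P : list eqn) (e : eqn) : Prop :=
  match e with Eqn _ l r =>
    exists H, hd_var l = Some H /\ fv l = [H] /\ ~ In H (fv r) /\
      forall e', In e' P -> In H (fv_eqn e') -> e' = e end.
Definition occ (P : list eqn) : Prop := forall e, In e P -> occ1 P e.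

Lemma ty_args_arrows : forall l T, ty_args (arrows l T) = l ++ ty_args T.
Proof. induction l; intros; simpl; auto. f_equal; auto. Qed.

Lemma closed_comp : forall r th, closed r -> closed th -> closed (Defs.comp r th).
Proof. intros r th Hr Ht X. unfold Defs.comp. apply bnd_app_sub; auto. Qed.

Lemma wf_closed : forall r, wf r -> closed r.
Proof. intros r H X. apply H. Qed.

Lemma wf_lamc : forall r, wf r -> forall X, arity X <= lamc (r X).
Proof. intros r H X. apply H. Qed.

Lemma wf_arq : forall r, wf r -> forall X, arq (r X).
Proof. intros r H X. apply H. Qed.

Lemma comp2 : forall phi r th t, wf phi -> wf r -> closed th -> arq t ->
  app_sub th (app_sub (Defs.comp phi r) t) = app_sub (Defs.comp r th) (app_sub phi t).
Proof.
  intros phi r th t Hp Hr Hth Ht.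
  rewrite <- app_sub_comp; auto using wf_closed, wf_lamc.
  apply app_sub_comp; auto using wf_lamc. apply arq_app_sub; auto using wf_arq.
Qed.

Lemma unif_comp : forall r th e, closed th -> arqe e -> (forall X, arity X <= lamc (r X)) ->
  (unif (Defs.comp r th) e <-> unif th (app_eq r e)).
Proof.
  intros r th [G l u] Hth [Hl Hu] Hr. simpl. rewrite !app_sub_comp; auto. tauto.
Qed.

Lemma arqe_app_eq : forall r e, wf r -> arqe e -> arqe (app_eq r e).
Proof. intros r [G l u] Hr [Hl Hu]; simpl; split; apply arq_app_sub; auto using wf_arq. Qed.

Lemma app_sub_fresh_id : forall r t, arq t -> (forall X, In X (fv t) -> r X = eps X) ->
  app_sub r t = t.
Proof. intros. rewrite (app_sub_agree t r eps); auto. apply app_sub_eps; auto. Qed.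

Lemma nth_error_lt : forall (xs : list nat) j i, nth_error xs j = Some i ->
  j < length xs /\ nth j xs 0 = i.
Proof.
  intros. split. apply nth_error_Some. congruence. apply nth_error_nth; auto.
Qed.

Lemma index_of_spec : forall z xs, In z xs -> index_of z xs < length xs /\ nth (index_of z xs) xs 0 = z.
Proof.
  induction xs; simpl; intros Hz; [tauto|].
  destruct (Nat.eqb_spec z a); simpl. split; [lia| auto].
  destruct Hz as [Hz|Hz]; [congruence|]. destruct (IHxs Hz). split; [lia|auto].
Qed.

Lemma common_In : forall z xs ys, In z (common xs ys) -> In z xs /\ In z ys.
Proof.
  unfold common. intros z xs ys H. apply filter_In in H. destruct H as [H1 H2].
  split; auto. apply existsb_exists in H2. destruct H2 as [y [Hy Heq]].
  apply Nat.eqb_eq in Heq. subst; auto.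
Qed.

Lemma combine_unique : forall (A B : Type) (l1 : list A) (l2 : list B) a b b',
  NoDup l1 -> In (a, b) (combine l1 l2) -> In (a, b') (combine l1 l2) -> b = b'.
Proof.
  induction l1; intros [|y l2] x b b' HN H1 H2; simpl in *; try tauto.
  apply NoDup_cons_iff in HN. destruct HN as [HN1 HN2].
  destruct H1 as [E1|H1], H2 as [E2|H2].
  - congruence.
  - inversion E1; subst. apply in_combine_l in H2. tauto.
  - inversion E2; subst. apply in_combine_l in H1. tauto.
  - eauto.
Qed.

Lemma fv_prob_In : forall X e P, In e P -> In X (fv_eqn e) -> In X (fv_prob P).
Proof. intros. unfold fv_prob. apply in_flat_map. eauto. Qed.

Lemma fv_rig_In : forall X s ss a, In s ss -> In X (fv s) -> In X (fv (Rig a ss)).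
Proof. intros. simpl. apply in_flat_map. eauto. Qed.

Lemma hd_var_lams : forall l b, hd_var (lams l b) = hd_var b.
Proof. induction l; simpl; auto. Qed.

Lemma long_app_eq : forall H zs, long_app H zs =
  lams (skipn (length zs) (ty_args (fv_ty H)))
    (Flex H (map (fun x => x + (arity H - length zs)) zs ++ rev (seq 0 (arity H - length zs)))).
Proof. intros. unfold long_app. rewrite length_skipn. reflexivity. Qed.

Lemma long_app_fv : forall H zs, fv (long_app H zs) = [H].
Proof. intros. rewrite long_app_eq, fv_lams. reflexivity. Qed.

Lemma long_app_hd : forall H zs, hd_var (long_app H zs) = Some H.
Proof. intros. rewrite long_app_eq, hd_var_lams. reflexivity. Qed.

Lemma long_app_arq : forall H zs, length zs <= arity H -> arq (long_app H zs).
Proof.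
  intros. rewrite long_app_eq. apply arq_lams. constructor.
  rewrite length_app, length_map, length_rev, length_seq. lia.
Qed.

Lemma long_app_bnd : forall H zs k, length zs <= arity H -> Forall (fun z => z < k) zs ->
  bnd k (long_app H zs).
Proof.
  intros H zs k Hl Hz. rewrite long_app_eq. apply bnd_lams. constructor.
  rewrite length_skipn. fold (arity H).
  rewrite Forall_forall in *. intros y Hy. apply in_app_iff in Hy. destruct Hy as [Hy|Hy].
  - apply in_map_iff in Hy. destruct Hy as [z [<- Hz']]. specialize (Hz z Hz'). lia.
  - apply in_rev, in_seq in Hy. lia.
Qed.

Definition instf (xs : list nat) : nat -> nat :=
  fun k => if k <? length xs then nth (length xs - 1 - k) xs 0 else k - length xs.

Lemma inst_unfold : forall w xs, inst w xs = rename (instf xs) (strip (length xs) w).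
Proof. reflexivity. Qed.

Lemma long_app_rename : forall H xs, length xs <= arity H ->
  rename (instf xs) (long_app H (rev (seq 0 (length xs)))) = long_app H xs.
Proof.
  intros H xs Hl. rewrite !long_app_eq, rename_lams. rewrite length_rev, length_seq.
  f_equal. simpl. f_equal. rewrite map_app, map_map.
  f_equal.
  - rewrite <- (inst_map xs (length xs)) at 2 by auto. rewrite map_map.
    apply map_ext. intros j. rewrite length_skipn. fold (arity H). rewrite upn_ge. reflexivity.
  - etransitivity; [|apply map_id]. apply map_ext_in. intros j Hj. apply in_rev, in_seq in Hj. apply upn_lt.
    rewrite length_skipn. fold (arity H). lia.
Qed.

Local Open Scope nat_scope.

Definition VEInv (l0 r0 : tm) (c : list eqn * subst) : Prop :=
  let (P, phi) := c in
  NoDup P /\ (forall e, In e P -> arqe e) /\ occ P /\ wf phi /\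
  (forall th, closed th -> (forall e, In e P -> unif th e) ->
     app_sub th (app_sub phi l0) = app_sub th (app_sub phi r0)).

Lemma in_sel : forall (A : Type) (x e : A) P1 P2, In x (P1 ++ e :: P2) <-> x = e \/ In x (P1 ++ P2).
Proof. intros. rewrite !in_app_iff. simpl. intuition. Qed.

Lemma ve_abs : forall l0 r0 P1 P2 G a t s phi P',
  same_set P' (Eqn (a :: G) t s :: P1 ++ P2) ->
  VEInv l0 r0 (P1 ++ Eqn G (Lam a t) (Lam a s) :: P2, phi) -> VEInv l0 r0 (P', phi).
Proof.
  intros l0 r0 P1 P2 G a t s phi P' [HN HE] [ND [AR [OC [WF K]]]].
  set (e := Eqn G (Lam a t) (Lam a s)) in *.
  assert (Hnot : ~ In e (P1 ++ P2)) by (apply NoDup_remove_2; auto).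
  assert (He : In e (P1 ++ e :: P2)) by (apply in_sel; auto).
  assert (Hin : forall x, In x (P1 ++ P2) -> In x (P1 ++ e :: P2)) by (intros; apply in_sel; auto).
  split; [auto|split; [|split; [|split; [auto|]]]].
  - intros x Hx. apply HE in Hx. destruct Hx as [<-|Hx]; [|apply AR, Hin, Hx].
    destruct (AR e He) as [A1 A2]. inversion A1; inversion A2; subst. simpl; auto.
  - intros x Hx. apply HE in Hx. destruct Hx as [<-|Hx].
    + destruct (OC e He) as [H [H1 [H2 [H3 H4]]]]. exists H. simpl in *.
      split; [auto|split; [auto|split; [auto|]]].
      intros e' He' Hf. apply HE in He'. destruct He' as [<-|He']; auto.
      exfalso. apply Hnot. replace e with e'; auto.
    + generalize (OC x (Hin x Hx)). destruct x as [Gx lx rx]. simpl.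
      intros [H [H1 [H2 [H3 H4]]]]. exists H. split; [auto|split; [auto|split; [auto|]]].
      intros e' He' Hf. apply HE in He'. destruct He' as [<-|He']; auto.
      exfalso. assert (e = Eqn Gx lx rx) by (apply H4; auto).
      apply Hnot. rewrite H0; auto.
  - intros th Hth Hu. apply K; auto. intros x Hx. apply in_sel in Hx.
    destruct Hx as [->|Hx]; [|apply Hu, HE; simpl; auto].
    assert (Hn := Hu (Eqn (a :: G) t s) (proj2 (HE _) (or_introl eq_refl))).
    simpl in *. rewrite Hn. auto.
Qed.

Lemma Forall2_In_l : forall (A B : Type) (Rl : A -> B -> Prop) l1 l2 x,
  Forall2 Rl l1 l2 -> In x l1 -> exists y, Rl x y.
Proof.
  intros A B Rl l1 l2 x H. induction H; simpl; intros Hx; [tauto|].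
  destruct Hx as [<-|Hx]; eauto.
Qed.

Lemma map_combine_eq : forall (A B C : Type) (f : A -> C) (g : B -> C) l1 l2,
  length l1 = length l2 -> (forall a b, In (a, b) (combine l1 l2) -> f a = g b) ->
  map f l1 = map g l2.
Proof.
  induction l1; intros [|b l2] Hl H; simpl in *; try lia; auto.
  f_equal. apply H; auto. apply IHl1. lia. intros; apply H; auto.
Qed.

Lemma fresh_not_in : forall H P Pout s e, fresh H (P ++ Pout) s -> In e P -> ~ In H (fv_eqn e).
Proof.
  intros H P Pout s e [Hf _] He Hin. apply Hf. eapply fv_prob_In; eauto. apply in_app_iff; auto.
Qed.

Lemma ve1 : forall l0 r0 Pout sout P1 P2 G F xs a ss phi a' Ta Hs P',
  arq l0 -> arq r0 ->
  ((exists c, a = Cn c /\ a' = Cn c /\ Ta = c_ty c) \/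
     (exists i j, a = Bv i /\ nth_error xs j = Some i /\
                  a' = Bv (length xs - 1 - j)%nat /\ nth_error G i = Some Ta)) ->
  Forall2 (fun H Ti => fv_ty H = arrows (ty_args (fv_ty F)) Ti) Hs (ty_args Ta) ->
  length Hs = length ss ->
  NoDup Hs ->
  Forall (fun H => fresh H ((P1 ++ Eqn G (Flex F xs) (Rig a ss) :: P2) ++ Pout) phi
                   /\ fresh H [] sout) Hs ->
  same_set P' (map (fun p => Eqn G (long_app (fst p) xs) (snd p)) (combine Hs ss)
               ++ P1 ++ P2) ->
  VEInv l0 r0 (P1 ++ Eqn G (Flex F xs) (Rig a ss) :: P2, phi) ->
  VEInv l0 r0 (P', Defs.comp phi (bind1 F (lams (ty_args (fv_ty F))
                     (Rig a' (map (fun H => long_app H (rev (seq 0 (length xs)))) Hs))))).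
Proof.
  intros l0 r0 Pout sout P1 P2 G F xs a ss phi a' Ta Hs P' Hl0 Hr0 Ha HT HL HND HFr
    [HN HE] [ND [AR [OC [WF K]]]].
  set (e := Eqn G (Flex F xs) (Rig a ss)) in *.
  set (B := lams (ty_args (fv_ty F))
                     (Rig a' (map (fun H => long_app H (rev (seq 0 (length xs)))) Hs))).
  set (rho := bind1 F B).
  assert (Hnot : ~ In e (P1 ++ P2)) by (apply NoDup_remove_2; auto).
  assert (He : In e (P1 ++ e :: P2)) by (apply in_sel; auto).
  assert (Hin : forall x, In x (P1 ++ P2) -> In x (P1 ++ e :: P2)) by (intros; apply in_sel; auto).
  destruct (AR e He) as [AF ARig]. inversion AF as [| |F' xs' Hlen]; subst F' xs'.
  inversion ARig as [|a'' ss' Hss|]; subst a'' ss'.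
  destruct (OC e He) as [H0 [HH1 [HH2 [HF HF4]]]]. simpl in HH1. inversion HH1; subst H0.
  assert (Hfr : forall H, In H Hs -> forall e', In e' (P1 ++ e :: P2) -> ~ In H (fv_eqn e')).
  { intros H HinH e' He'. rewrite Forall_forall in HFr. destruct (HFr H HinH) as [Hf _].
    eapply fresh_not_in; eauto. }
  assert (HarH : forall H, In H Hs -> length xs <= arity H).
  { intros H HinH. destruct (Forall2_In_l _ _ _ _ _ _ HT HinH) as [Ti HTi].
    unfold arity. rewrite HTi, ty_args_arrows, length_app. rewrite Hlen. unfold arity. lia. }
  assert (Hnew : forall x, In x (map (fun p => Eqn G (long_app (fst p) xs) (snd p)) (combine Hs ss))
     <-> exists H s, In (H, s) (combine Hs ss) /\ x = Eqn G (long_app H xs) s).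
  { intros x. rewrite in_map_iff. split.
    - intros [[H s] [<- Hp]]. eauto.
    - intros [H [s [Hp ->]]]. exists (H, s). auto. }
  assert (HP' : forall x, In x P' <-> (exists H s, In (H, s) (combine Hs ss) /\ x = Eqn G (long_app H xs) s)
                                  \/ In x (P1 ++ P2)).
  { intros x. rewrite HE, in_app_iff, Hnew. tauto. }
  assert (Hro : forall X, X <> F -> rho X = eps X).
  { intros X HX. unfold rho, bind1. destruct (fvar_eq_dec X F); [congruence|reflexivity]. }
  assert (HrF : rho F = B).
  { unfold rho, bind1. destruct (fvar_eq_dec F F); congruence. }
  assert (Hn : length xs = length (ty_args (fv_ty F))) by exact Hlen.
  assert (WFr : wf rho).
  { intros X. destruct (fvar_eq_dec X F) as [->|HX]; [|rewrite Hro by auto; apply wf_eps].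
    rewrite HrF. unfold B. split; [|split].
    - apply bnd_lams. simpl. rewrite <- Hn.
      destruct Ha as [[c [-> [-> ->]]] | [i [j [-> [Hj [-> HG]]]]]].
      + constructor. rewrite Forall_forall. intros x Hx. apply in_map_iff in Hx.
        destruct Hx as [H [<- HH]]. apply long_app_bnd.
        rewrite length_rev, length_seq; auto.
        rewrite Forall_forall. intros z Hz. apply in_rev, in_seq in Hz. lia.
      + destruct (nth_error_lt _ _ _ Hj) as [Hj1 Hj2]. constructor. lia.
        rewrite Forall_forall. intros x Hx. apply in_map_iff in Hx.
        destruct Hx as [H [<- HH]]. apply long_app_bnd.
        rewrite length_rev, length_seq; auto.
        rewrite Forall_forall. intros z Hz. apply in_rev, in_seq in Hz. lia.
    - rewrite lamc_lams. unfold arity. lia.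
    - apply arq_lams. constructor. rewrite Forall_forall. intros x Hx. apply in_map_iff in Hx.
      destruct Hx as [H [<- HH]]. apply long_app_arq. rewrite length_rev, length_seq; auto. }
  assert (HrFlex : app_sub rho (Flex F xs) = Rig a (map (fun H => long_app H xs) Hs)).
  { assert (SB : forall b, strip (length xs) (lams (ty_args (fv_ty F)) b) = b)
      by (intros; rewrite Hn; apply strip_lams).
    change (app_sub rho (Flex F xs)) with (inst (rho F) xs).
    rewrite HrF, inst_unfold. unfold B. rewrite SB.
    destruct Ha as [[c [-> [-> ->]]] | [i [j [-> [Hj [-> HG]]]]]].
    - simpl. f_equal. rewrite map_map. apply map_ext_in. intros H HH.
      apply long_app_rename; auto.
    - destruct (nth_error_lt _ _ _ Hj) as [Hj1 Hj2]. simpl. f_equal.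
      + f_equal. unfold instf.
        assert (E : (length xs - 1 - j <? length xs) = true) by (apply Nat.ltb_lt; lia).
        rewrite E. replace (length xs - 1 - (length xs - 1 - j)) with j by lia. auto.
      + rewrite map_map. apply map_ext_in. intros H HH.
        apply long_app_rename; auto. }
  assert (HrRig : app_sub rho (Rig a ss) = Rig a ss).
  { apply app_sub_fresh_id; auto. intros X HX. apply Hro. intros ->. auto. }
  assert (Hold : forall x, In x (P1 ++ P2) -> app_eq rho x = x).
  { intros [Gx lx rx] Hx. destruct (AR _ (Hin _ Hx)) as [A1 A2]. simpl.
    assert (Hnf : forall X, In X (fv lx ++ fv rx) -> X <> F).
    { intros X HX ->. assert (Ex : Eqn Gx lx rx = e) by (apply HF4; auto). apply Hnot. rewrite <- Ex; auto. }
    rewrite !app_sub_fresh_id; auto; intros X HX; apply Hro, Hnf; apply in_app_iff; auto. }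
  split; [auto|split; [|split; [|split; [apply wf_comp; auto|]]]].
  - intros x Hx. apply HP' in Hx. destruct Hx as [[H [s [Hp ->]]]|Hx]; [|apply AR, Hin, Hx].
    simpl. split. apply long_app_arq, HarH. eapply in_combine_l; eauto.
    rewrite Forall_forall in Hss. apply Hss. eapply in_combine_r; eauto.
  - intros x Hx. apply HP' in Hx. destruct Hx as [[H [s [Hp ->]]]|Hx].
    + assert (HinH : In H Hs) by (eapply in_combine_l; eauto).
      assert (Hins : In s ss) by (eapply in_combine_r; eauto).
      assert (HnH : forall X, In X (fv s) -> X <> H).
      { intros X HX ->. apply (Hfr H HinH e He). simpl. right. apply (fv_rig_In _ s ss a); auto. }
      simpl. exists H. rewrite long_app_hd, long_app_fv.
      split; [auto|split; [auto|split; [intros HX; apply (HnH H HX); auto|]]].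
      intros e' He' Hf. apply HP' in He'. destruct He' as [[H2 [s2 [Hp2 ->]]]|He'].
      * simpl in Hf. rewrite long_app_fv in Hf. destruct Hf as [<-|Hf].
        -- rewrite (combine_unique _ _ _ _ _ _ _ HND Hp Hp2). auto.
        -- exfalso. apply (Hfr H HinH e He). simpl. right.
           apply (fv_rig_In _ s2 ss a); [eapply in_combine_r; eauto | auto].
      * exfalso. apply (Hfr H HinH e'); auto.
    + generalize (OC x (Hin x Hx)). destruct x as [Gx lx rx]. simpl.
      intros [H [H1 [H2 [H3 H4]]]]. exists H. split; [auto|split; [auto|split; [auto|]]].
      intros e' He' Hf. apply HP' in He'. destruct He' as [[H5 [s2 [Hp2 ->]]]|He']; auto.
      exfalso. simpl in Hf. rewrite long_app_fv in Hf. destruct Hf as [<-|Hf].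
      * apply (Hfr H5 (in_combine_l _ _ _ _ Hp2) (Eqn Gx lx rx) (Hin _ Hx)).
        simpl. rewrite H2. simpl; auto.
      * assert (e = Eqn Gx lx rx).
        { apply H4; auto. simpl. right. apply (fv_rig_In _ s2 ss a); [eapply in_combine_r; eauto | auto]. }
        apply Hnot. rewrite H0; auto.
  - intros th Hth Hu. rewrite !comp2; auto. apply K; [apply closed_comp; auto using wf_closed|].
    intros x Hx. apply in_sel in Hx.
    destruct Hx as [->|Hx].
    + apply unif_comp; auto using wf_lamc.
      change (app_sub th (app_sub rho (Flex F xs)) = app_sub th (app_sub rho (Rig a ss))).
      rewrite HrFlex, HrRig. simpl.
      f_equal. rewrite map_map. apply map_combine_eq; auto.
      intros H s Hp. apply (Hu (Eqn G (long_app H xs) s)). apply HP'. left. eauto.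
    + apply unif_comp; auto using wf_lamc. rewrite Hold; auto. apply Hu, HP'. auto.
Qed.

Lemma ve2_body : forall X xs H cs, length xs = arity X -> (forall z, In z cs -> In z xs) ->
  length cs = arity H ->
  let BB := lams (ty_args (fv_ty X)) (Flex H (map (fun z => length xs - 1 - index_of z xs) cs)) in
  (bnd 0 BB /\ arity X <= lamc BB /\ arq BB) /\ inst BB xs = Flex H cs.
Proof.
  intros X xs H cs Hx Hcs Hc BB. split; [split; [|split]|].
  - apply bnd_lams. simpl. constructor. rewrite Forall_forall. intros y Hy.
    apply in_map_iff in Hy. destruct Hy as [z [<- Hz]].
    destruct (index_of_spec z xs (Hcs z Hz)). unfold arity in Hx. lia.
  - unfold BB. rewrite lamc_lams. unfold arity. lia.
  - apply arq_lams. constructor. rewrite length_map. auto.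
  - assert (SB : forall b, strip (length xs) (lams (ty_args (fv_ty X)) b) = b)
      by (intros; rewrite Hx; apply strip_lams).
    rewrite inst_unfold. unfold BB. rewrite SB. simpl.
    f_equal. rewrite map_map. etransitivity; [|apply map_id]. apply map_ext_in.
    intros z Hz. destruct (index_of_spec z xs (Hcs z Hz)) as [I1 I2]. unfold instf.
    assert (E : (length xs - 1 - index_of z xs <? length xs) = true) by (apply Nat.ltb_lt; lia).
    rewrite E. replace (length xs - 1 - (length xs - 1 - index_of z xs)) with (index_of z xs) by lia.
    auto.
Qed.

Lemma ve2 : forall l0 r0 Pout P1 P2 G F xs Gv ys phi H P',
  arq l0 -> arq r0 ->
  fv_ty H = arrows (map (fun z => nth (index_of z xs) (ty_args (fv_ty F)) (Defs.Base 0))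
                          (common xs ys)) (Defs.Base (ty_res (fv_ty F))) ->
  fresh H ((P1 ++ Eqn G (Flex F xs) (Flex Gv ys) :: P2) ++ Pout) phi ->
  same_set P' (map (app_eq (ve2_subst F xs Gv ys H)) (P1 ++ P2)) ->
  VEInv l0 r0 (P1 ++ Eqn G (Flex F xs) (Flex Gv ys) :: P2, phi) ->
  VEInv l0 r0 (P', Defs.comp phi (ve2_subst F xs Gv ys H)).
Proof.
  intros l0 r0 Pout P1 P2 G F xs Gv ys phi H P' Hl0 Hr0 HTy HFr [HN HE] [ND [AR [OC [WF K]]]].
  set (e := Eqn G (Flex F xs) (Flex Gv ys)) in *.
  set (rho := ve2_subst F xs Gv ys H).
  assert (Hnot : ~ In e (P1 ++ P2)) by (apply NoDup_remove_2; auto).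
  assert (He : In e (P1 ++ e :: P2)) by (apply in_sel; auto).
  assert (Hin : forall x, In x (P1 ++ P2) -> In x (P1 ++ e :: P2)) by (intros; apply in_sel; auto).
  destruct (AR e He) as [AF AG]. inversion AF as [| |F' xs' HlenF]; subst F' xs'.
  inversion AG as [| |G' ys' HlenG]; subst G' ys'.
  destruct (OC e He) as [H0 [HH1 [HH2 [HF HF4]]]]. simpl in HH1. inversion HH1; subst H0.
  assert (HFG : F <> Gv) by (intros ->; apply HF; simpl; auto).
  assert (HaH : length (common xs ys) = arity H).
  { unfold arity. rewrite HTy, ty_args_arrows. simpl. rewrite app_nil_r, length_map. auto. }
  assert (Hfr : forall e', In e' (P1 ++ e :: P2) -> ~ In H (fv_eqn e')).
  { intros e' He'. eapply fresh_not_in; eauto. }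
  assert (Hro : forall X, X <> F -> X <> Gv -> rho X = eps X).
  { intros X H1 H2. unfold rho, ve2_subst, bind2.
    destruct (fvar_eq_dec X F); [congruence|]. destruct (fvar_eq_dec X Gv); [congruence|reflexivity]. }
  assert (HcF : forall z, In z (common xs ys) -> In z xs) by (intros z Hz; apply (common_In z xs ys Hz)).
  assert (HcG : forall z, In z (common xs ys) -> In z ys) by (intros z Hz; apply (common_In z xs ys Hz)).
  destruct (ve2_body F xs H (common xs ys) HlenF HcF HaH) as [WBF IBF].
  destruct (ve2_body Gv ys H (common xs ys) HlenG HcG HaH) as [WBG IBG].
  assert (HrF : rho F = lams (ty_args (fv_ty F))
     (Flex H (map (fun z => length xs - 1 - index_of z xs) (common xs ys)))).
  { unfold rho, ve2_subst, bind2. destruct (fvar_eq_dec F F); congruence. }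
  assert (HrG : rho Gv = lams (ty_args (fv_ty Gv))
     (Flex H (map (fun z => length ys - 1 - index_of z ys) (common xs ys)))).
  { unfold rho, ve2_subst, bind2. destruct (fvar_eq_dec Gv F); [congruence|].
    destruct (fvar_eq_dec Gv Gv); congruence. }
  assert (WFr : wf rho).
  { intros X. destruct (fvar_eq_dec X F) as [->|H1]; [rewrite HrF; auto|].
    destruct (fvar_eq_dec X Gv) as [->|H2]; [rewrite HrG; auto|].
    rewrite Hro by auto. apply wf_eps. }
  assert (Hfv : forall X Y, In X (fv (rho Y)) -> X = H \/ X = Y).
  { intros X Y HX. destruct (fvar_eq_dec Y F) as [->|H1].
    - rewrite HrF, fv_lams in HX. simpl in HX. destruct HX as [<-|[]]; auto.
    - destruct (fvar_eq_dec Y Gv) as [->|H2].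
      + rewrite HrG, fv_lams in HX. simpl in HX. destruct HX as [<-|[]]; auto.
      + rewrite Hro, eps_eq, fv_lams in HX by auto. simpl in HX. destruct HX as [<-|[]]; auto. }
  assert (HP' : forall x, In x P' <-> exists x0, In x0 (P1 ++ P2) /\ x = app_eq rho x0).
  { intros x. rewrite HE, in_map_iff. split; intros [x0 [A B]]; eauto. }
  split; [auto|split; [|split; [|split; [apply wf_comp; auto|]]]].
  - intros x Hx. apply HP' in Hx. destruct Hx as [x0 [Hx0 ->]].
    apply arqe_app_eq; auto.
  - intros x Hx. apply HP' in Hx. destruct Hx as [x1 [Hx1 ->]].
    generalize (OC x1 (Hin x1 Hx1)). generalize (AR x1 (Hin x1 Hx1)).
    destruct x1 as [G1 l1 r1]. simpl.
    intros [A1 A2] [H1 [K1 [K2 [K3 K4]]]].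
    assert (N1 : H1 <> F).
    { intros ->. assert (Eqn G1 l1 r1 = e) by (apply HF4; [apply Hin; auto| simpl; rewrite K2; simpl; auto]).
      apply Hnot. rewrite <- H0. auto. }
    assert (N2 : H1 <> Gv).
    { intros ->. assert (e = Eqn G1 l1 r1) by (apply K4; auto; simpl; auto).
      apply Hnot. rewrite H0. auto. }
    assert (N3 : H1 <> H).
    { intros ->. apply (Hfr (Eqn G1 l1 r1)). apply Hin; auto. simpl. rewrite K2. simpl; auto. }
    assert (L1 : app_sub rho l1 = l1).
    { apply app_sub_fresh_id; auto. intros X HX. rewrite K2 in HX. destruct HX as [<-|[]].
      apply Hro; auto. }
    rewrite L1. exists H1. split; [auto|split; [auto|split]].
    + intros HX. apply fv_app_sub in HX. destruct HX as [Y [HY1 HY2]].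
      destruct (Hfv _ _ HY2) as [|<-]; [congruence| auto].
    + intros e'' He'' Hf. apply HP' in He''. destruct He'' as [x2 [Hx2 ->]].
      destruct x2 as [G2 l2 r2]. simpl in Hf.
      assert (In H1 (fv_eqn (Eqn G2 l2 r2))).
      { simpl. apply in_app_iff in Hf. apply in_app_iff.
        destruct Hf as [Hf|Hf]; apply fv_app_sub in Hf; destruct Hf as [Y [HY1 HY2]];
          destruct (Hfv _ _ HY2) as [|<-]; try congruence; auto. }
      assert (Eqn G2 l2 r2 = Eqn G1 l1 r1) by (apply K4; auto).
      rewrite H2. simpl. rewrite L1. auto.
  - intros th Hth Hu. rewrite !comp2; auto. apply K; [apply closed_comp; auto using wf_closed|].
    intros x Hx. apply in_sel in Hx.
    destruct Hx as [->|Hx].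
    + apply unif_comp; auto using wf_lamc.
      change (app_sub th (inst (rho F) xs) = app_sub th (inst (rho Gv) ys)).
      rewrite HrF, HrG, IBF, IBG. auto.
    + apply unif_comp; auto using wf_lamc. apply Hu, HP'. eauto.
Qed.

Local Open Scope nat_scope.

Lemma ve_step_pres : forall l0 r0 Pout sout c c', arq l0 -> arq r0 ->
  ve_step Pout sout c c' -> VEInv l0 r0 c -> VEInv l0 r0 c'.
Proof.
  intros l0 r0 Pout sout c c' Hl Hr Hs. destruct Hs.
  - apply ve_abs; auto.
  - eapply ve1; eauto.
  - eapply ve2; eauto.
Qed.

Lemma star_inv : forall (A : Type) (st : A -> A -> Prop) (I : A -> Prop) c c',
  star st c c' -> I c -> (forall x y, st x y -> I x -> I y) -> I c'.
Proof. intros A st I c c' H. induction H; intros; eauto. Qed.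

Lemma varelim_sound : forall Pout sout G F xs u phi,
  length xs = arity F -> arq u -> ~ In F (fv u) ->
  VarElim Pout sout G (Flex F xs) u phi ->
  wf phi /\ app_sub phi (Flex F xs) = app_sub phi u.
Proof.
  intros Pout sout G F xs u phi Hl Hu HF HV. unfold VarElim in HV.
  assert (HA : arq (Flex F xs)) by (constructor; auto).
  assert (I := star_inv _ _ (VEInv (Flex F xs) u) _ _ HV).
  destruct I as [_ [_ [_ [WF K]]]].
  - split; [constructor; [intros []|constructor]|split; [|split; [|split]]].
    + intros e [<-|[]]. simpl; auto.
    + intros e [<-|[]]. simpl. exists F. split; [auto|split; [auto|split; [auto|]]].
      intros e' [<-|[]] _. auto.
    + apply wf_eps.
    + intros th Hth Hun. rewrite !app_sub_eps; auto.
      apply (Hun (Eqn G (Flex F xs) u)). simpl; auto.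
  - intros x y Hxy Hx. eapply ve_step_pres; eauto.
  - split; auto. specialize (K eps (wf_closed _ wf_eps)).
    rewrite !app_sub_eps in K; auto using arq_app_sub, wf_arq.
    apply K. intros e [].
Qed.

Lemma wt_arq : forall t G T, wt G t T -> arq t.
Proof.
  induction t using tm_ind'; intros G T Hw; inversion Hw; subst.
  - constructor. eauto.
  - constructor. rewrite Forall_forall in *. intros x Hx.
    match goal with H : Forall2 _ ts _ |- _ => destruct (Forall2_In_l _ _ _ _ _ _ H Hx) as [T' HT'] end. eauto.
  - constructor. rewrite Forall_forall in *. intros x Hx.
    match goal with H : Forall2 _ ts _ |- _ => destruct (Forall2_In_l _ _ _ _ _ _ H Hx) as [T' HT'] end. eauto.
  - constructor. unfold arity. eapply Forall2_length; eauto.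
Qed.

Local Open Scope R_scope.

Section H.
Variable RA : const -> const -> R.
Hypothesis HS : similarity RA.
Variable mu : R.
Variables t0 s0 : tm.
Hypothesis Ht0 : arq t0.
Hypothesis Hs0 : arq s0.

Definition HInv (c : cfg) : Prop :=
  match c with
  | Bot => False
  | Cfg P s d => (forall e, In e P -> arqe e) /\ wf s /\ mu <= d /\ d <= 1 /\
      forall th, closed th ->
        Rt RA (app_sub th (app_sub s t0)) (app_sub th (app_sub s s0)) = Rmin d (Rp RA th P)
  end.

Lemma Rp_comp : forall r th Q, wf r -> closed th -> (forall e, In e Q -> arqe e) ->
  Rp RA (Defs.comp r th) Q = Rp RA th (map (app_eq r) Q).
Proof.
  induction Q; intros Hr Hth HQ; simpl; auto. f_equal.
  - destruct a as [G l u]. destruct (HQ _ (or_introl eq_refl)) as [A1 A2]. simpl.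
    rewrite !app_sub_comp; auto using wf_lamc.
  - apply IHQ; auto. intros; apply HQ; simpl; auto.
Qed.

Lemma solve_step : forall P1 e P2 s d r P',
  wf r -> unif r e -> same_set P' (map (app_eq r) (P1 ++ P2)) ->
  HInv (Cfg (P1 ++ e :: P2) s d) -> HInv (Cfg P' (Defs.comp s r) d).
Proof.
  intros P1 e P2 s d r P' Wr Ue [HN HE] [AR [WS [Hm [Hd J]]]].
  split; [|split; [apply wf_comp; auto|split; [auto|split; [auto|]]]].
  - intros x Hx. apply HE, in_map_iff in Hx. destruct Hx as [x0 [<- Hx0]].
    apply arqe_app_eq; auto. apply AR, in_sel; auto.
  - intros th Hth. rewrite !comp2; auto using wf_closed.
    rewrite J by (apply closed_comp; auto using wf_closed).
    rewrite (Rp_sel RA HS). rewrite Rp_comp; auto.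
    2: { intros x Hx; apply AR, in_sel; auto. }
    rewrite (Rp_same RA HS th P' (map (app_eq r) (P1 ++ P2))) by auto.
    assert (Req RA (Defs.comp r th) e = 1).
    { destruct e as [G l u]. destruct (AR (Eqn G l u)) as [A1 A2]. apply in_sel; auto.
      simpl. rewrite <- !app_sub_comp; auto using wf_lamc. simpl in Ue. rewrite Ue.
      apply Rt_refl; auto. }
    rewrite H. pose proof (Rp_bounds RA HS th (map (app_eq r) (P1 ++ P2))). rmin.
Qed.

Lemma Rlist_Rp : forall th G ts ss, length ts = length ss ->
  Rlist RA (map (app_sub th) ts) (map (app_sub th) ss) =
  Rp RA th (map (fun p => Eqn G (fst p) (snd p)) (combine ts ss)).
Proof.
  induction ts; intros [|s ss] Hl; simpl in *; try lia; auto.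
  f_equal. apply IHts. lia.
Qed.

Lemma hrule_pres : forall P1 e P2 s d c', hrule RA mu P1 e P2 s d c' ->
  HInv (Cfg (P1 ++ e :: P2) s d) -> HInv c'.
Proof.
  intros P1 e P2 s d c' Hr HI. 
  assert (HI' := HI). destruct HI' as [AR [WS [Hm [Hd J]]]].
  assert (ARe : arqe e) by (apply AR, in_sel; auto).
  assert (ARo : forall x, In x (P1 ++ P2) -> arqe x) by (intros; apply AR, in_sel; auto).
  destruct Hr.
  -
    subst e. destruct H0 as [HN HE]. destruct ARe as [A1 A2]. inversion A1; inversion A2; subst.
    split; [|split; [auto|split; [auto|split; [auto|]]]].
    + intros x Hx. apply HE in Hx. destruct Hx as [<-|Hx]; [simpl; auto| auto].
    + intros th Hth. rewrite J by auto. rewrite (Rp_sel RA HS).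
      rewrite (Rp_same RA HS th P' (Eqn (a :: G) t u :: P1 ++ P2)) by auto. simpl.
      destruct (ty_eq_dec a a); [auto|congruence].
  -
    subst e. destruct H2 as [HN HE]. destruct ARe as [A1 A2].
    inversion A1 as [|h1 ts1 F1|]; inversion A2 as [|h2 ss2 F2|]; subst.
    split; [|split; [auto|split; [auto|split; [|]]]].
    + intros x Hx. apply HE in Hx. apply in_app_iff in Hx. destruct Hx as [Hx|Hx]; auto.
      apply in_map_iff in Hx. destruct Hx as [[a b] [<- Hab]]. simpl.
      rewrite Forall_forall in F1, F2. split.
      apply F1. eapply in_combine_l; eauto. apply F2. eapply in_combine_r; eauto.
    + pose proof (Rh_bounds RA HS f g). unfold Rmin. destruct Rle_dec; lra.
    + intros th Hth. rewrite J by auto. rewrite (Rp_sel RA HS).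
      rewrite (Rp_same RA HS th P' _ HE), !(Rp_app RA HS). change (Req RA th (Eqn G (Rig f ts) (Rig g ss))) with (Rt RA (Rig f (map (app_sub th) ts)) (Rig g (map (app_sub th) ss))). rewrite Rt_rig.
      rewrite (Rlist_Rp th G) by auto.
      pose proof (Rh_bounds RA HS f g).
      pose proof (Rp_bounds RA HS th (map (fun p => Eqn G (fst p) (snd p)) (combine ts ss))).
      pose proof (Rp_bounds RA HS th (P1 ++ P2)). pose proof (Rp_bounds RA HS th P1). pose proof (Rp_bounds RA HS th P2). rmin.
  -
    subst e.
    match goal with Hl : length xs = length ys |- _ => rename Hl into HLxy end.
    match goal with Ht : fv_ty _ = arrows _ _ |- _ => rename Ht into HTy end.
    eapply solve_step; eauto.
    + intros X. destruct (fvar_eq_dec X F) as [->|HX].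
      * unfold sv_subst, bind1. destruct (fvar_eq_dec F F); [|congruence].
        destruct ARe as [A1 _]. inversion A1 as [| |F' xs' HlF]; subst.
        split; [|split].
        -- apply bnd_lams. simpl. constructor. rewrite Forall_forall. intros y Hy.
           apply in_map_iff in Hy. destruct Hy as [j [<- Hj]].
           unfold agree_pos in Hj. apply filter_In in Hj. destruct Hj as [Hj _].
           apply in_seq in Hj. unfold arity in HlF. lia.
        -- rewrite lamc_lams. unfold arity. lia.
        -- apply arq_lams. constructor. rewrite length_map. unfold arity. rewrite HTy.
           rewrite ty_args_arrows. simpl. rewrite app_nil_r, length_map. auto.
      * unfold sv_subst, bind1. destruct (fvar_eq_dec X F); [congruence|]. apply wf_eps.
    + simpl. unfold sv_subst, bind1. destruct (fvar_eq_dec F F); [|congruence].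
      rewrite !inst_unfold. rewrite <- HLxy.
      destruct ARe as [A1 _]. inversion A1 as [| |F' xs' HlF]; subst.
      assert (SB : forall b, strip (length xs) (lams (ty_args (fv_ty F)) b) = b)
        by (intros; rewrite HlF; apply strip_lams).
      rewrite SB. simpl. f_equal. rewrite !map_map. apply map_ext_in.
      intros j Hj. unfold agree_pos in Hj. apply filter_In in Hj. destruct Hj as [Hj1 Hj2].
      apply in_seq in Hj1. apply PeanoNat.Nat.eqb_eq in Hj2. unfold instf. rewrite <- HLxy.
      assert (E : (length xs - 1 - j <? length xs)%nat = true) by (apply PeanoNat.Nat.ltb_lt; lia).
      rewrite E. replace (length xs - 1 - (length xs - 1 - j))%nat with j by lia. auto.
  -
    subst e. destruct H1 as [HN HE]. destruct ARe as [A1 A2].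
    split; [|split; [auto|split; [auto|split; [auto|]]]].
    + intros x Hx. apply HE in Hx. destruct Hx as [<-|Hx]; [simpl; auto| auto].
    + intros th Hth. rewrite J by auto. rewrite (Rp_sel RA HS).
      rewrite (Rp_same RA HS th P' _ HE). simpl. rewrite Rt_sym; auto.
  -
    subst e. destruct ARe as [A1 A2]. inversion A1 as [| |F' xs' HlF]; subst.
    destruct (varelim_sound _ _ _ _ _ _ _ HlF A2 H1 H2) as [Wphi Uphi].
    eapply solve_step; eauto.
    + intros X. unfold restrict. destruct in_dec; [apply Wphi| apply wf_eps].
    + change (app_sub (restrict phi (F :: fv u)) (Flex F xs) = app_sub (restrict phi (F :: fv u)) u).
      rewrite (app_sub_agree (Flex F xs) _ phi), (app_sub_agree u _ phi).
      * exact Uphi.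
      * intros X HX. unfold restrict. destruct in_dec; auto. exfalso; apply n; simpl; auto.
      * intros X HX. unfold restrict. destruct in_dec; auto. exfalso; apply n; simpl; auto.
        simpl in HX. destruct HX as [<-|[]]. simpl; auto.
Qed.

Lemma star_hinv : forall c c', star (hstep RA mu) c c' -> HInv c -> c' <> Bot -> HInv c'.
Proof.
  intros c c' Hst. induction Hst as [|x y z Hxy Hyz IH]; intros HI Hne; auto.
  destruct Hxy as [P1 e P2 s d c' Hr|P1 e P2 s d Hf].
  - apply IH; auto. eapply hrule_pres; eauto.
  - exfalso. inversion Hyz as [|a b c Hab]; subst; [congruence|]. inversion Hab.
Qed.

End H.

Open Scope R_scope.
Theorem theorem3 (RA : const -> const -> R) (mu : R) (t s : tm) (T : ty)
    (sigma : subst) (d : R) :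
  similarity RA ->
  0 < mu <= 1 ->
  hopattern t T ->
  hopattern s T ->
  star (hstep RA mu) (hopsu_init t s) (Cfg [] sigma d) ->
  mu <= d /\ Rt RA (app_sub sigma t) (app_sub sigma s) = d.
Proof.
  intros HS Hmu Ht Hs Hst.
  assert (At := wt_arq _ _ _ Ht). assert (As := wt_arq _ _ _ Hs).
  assert (HI0 : HInv RA mu t s (hopsu_init t s)).
  { unfold hopsu_init. simpl. split; [intros e [<-|[]]; simpl; auto|split; [apply wf_eps|split; [lra|split; [lra|]]]].
    intros th Hth. rewrite !app_sub_eps by auto.
    pose proof (Rt_bounds RA HS (app_sub th t) (app_sub th s)). rmin. }
  destruct (star_hinv RA HS mu t s At As _ _ Hst HI0 ltac:(discriminate)) as [_ [WS [Hm [Hd J]]]].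
  split; auto. specialize (J eps (wf_closed _ wf_eps)).
  rewrite !app_sub_eps in J by (apply arq_app_sub; auto using wf_arq). rewrite J. cbn [Rp]. clear J. unfold Rmin; destruct (Rle_dec d 1); lra.
Qed.
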